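(* Assume the Hashimoto matrix $B$ is irreducible. Let $\mathbf{p}:[0,1]\to(0,1]^E$ be continuous and set $\rho(\lambda):=\rho\big(B^T\mathrm{diag}(\mathbf{p}(\lambda))\big)$. Suppose a continuous phase transition occurs at $\lambda_c\in[0,1)$, i.e. $\mathbf{Q}(\mathbf{p}(\lambda))\to\mathbf{1}$ as $\lambda\to\lambda_c$, and there is a sequence $\lambda_n\to\lambda_c$ with $\mathbf{Q}(\mathbf{p}(\lambda_n))\neq\mathbf{1}$ for all $n$. Then $\rho(\lambda_c)=1$.
   Context: $\mathcal{G}=(V,E)$ is a finite directed graph, edges written $i\to j$, $M=|E|$; $\mathcal{N}^-(j)=\{k:\,k\to j\in E\}$. The Hashimoto matrix is $B_{i\to j,\,k\to l}=\delta_{jk}(1-\delta_{il})$; it is irreducible iff the directed graph on $E$ with an arc from $e$ to $e'$ whenever $B_{e,e'}\neq 0$ is strongly connected. $\rho$ denotes spectral radius. For $\mathbf{p}\in[0,1]^E$ define $\mathbf{F}(\cdot;\mathbf{p}):[0,1]^E\to[0,1]^E$ componentwise: for the edge $j\to i$, $$F_{j\to i}(\mathbf{y};\mathbf{p})=\prod_{k\in\mathcal{N}^-(j)\setminus\{i\}}\big(1-p_{k\to j}+p_{k\to j}\,y_{k\to j}\big)$$ (empty product $=1$), so that $\mathbf{F}'(\mathbf{1};\mathbf{p})=B^T\mathrm{diag}(\mathbf{p})$. $\mathbf{Q}(\mathbf{p})$ denotes the componentwise smallest fixed point of $\mathbf{F}(\cdot;\mathbf{p})$ in $[0,1]^E$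 (limit of iterates of $\mathbf{F}$ from $\mathbf{0}$). *)

(* Defs.v *)
From HB Require Import structures.
From mathcomp Require Import all_boot all_order all_algebra.
From mathcomp Require Import all_classical all_reals all_analysis.
From mathcomp Require Import complex.

Set Implicit Arguments.
Unset Strict Implicit.
Unset Printing Implicit Defensive.

Import Order.TTheory GRing.Theory Num.Theory.
Import numFieldNormedType.Exports.
Local Open Scope ring_scope.
Local Open Scope classical_set_scope.

(* A finite directed graph: vertex finType V and an edge relation G
   (i -> j is an edge iff G i j).  Edges are the elements of the finite
   subtype [edge G]; an edge a has tail (a).1 and head (a).2. *)
Definition edge_pred (V : finType) (G : rel V) : pred (V * V) :=
  fun x => G x.1 x.2.
Definition edge (V : finType) (G : rel V) := {x | edge_pred G x}.
HB.instance Definition _ (V : finType) (G : rel V) :=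
  Finite.copy (edge G) {x | edge_pred G x}.

Section Defs.
Variables (R : realType) (V : finType) (G : rel V).
Local Notation E := (edge G).

Definition etail (a : E) : V := (val a).1.
Definition ehead (a : E) : V := (val a).2.

(* Hashimoto matrix entry B_{i->j, k->l} = delta_{jk} (1 - delta_{il}) *)
Definition hashimoto (a b : E) : R :=
  ((ehead a == etail b) && (etail a != ehead b))%:R.

(* B is irreducible iff the digraph on E with an arc e -> e' whenever
   B_{e,e'} <> 0 is strongly connected. *)
Definition hashimoto_irreducible : Prop :=
  forall a b : E, connect (fun e e' : E => hashimoto e e' != 0) a b.

(* The matrix B^T diag(p), indexed by 'I_#|E| via the enumeration of E. *)
Definition BTdiag (p : E -> R) : 'M[R]_#|{: E}| :=
  \matrix_(i, j) (hashimoto (enum_val j) (enum_val i) * p (enum_val j)).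

Definition cmod (z : R[i]) : R := Num.sqrt (complex.Re z ^+ 2 + complex.Im z ^+ 2).

Definition spectral_radius (n : nat) (A : 'M[R]_n) : R :=
  sup [set r : R | exists z : R[i],
         root (char_poly (map_mx (fun x : R => x%:C%C) A)) z /\ r = cmod z].

(* F(y; p), componentwise: for the edge a = j -> i,
   F_a(y;p) = prod_{k in N^-(j) \ {i}} (1 - p_{k->j} + p_{k->j} y_{k->j}) *)
Definition Fmap (p : E -> R) (y : E -> R) : E -> R :=
  fun a => \prod_(b : E | (ehead b == etail a) && (etail b != ehead a))
             (1 - p b + p b * y b).

(* Q(p): the componentwise smallest fixed point of F(.;p) in [0,1]^E,
   realised as the limit of the iterates of F(.;p) started from 0. *)
Definition Qfix (p : E -> R) : E -> R :=
  fun a => lim ((fun n : nat => iter n (Fmap p) (fun _ => 0) a) @ \oo).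

End Defs.

(* Main.v *)
Require Import Defs.
From HB Require Import structures.
From mathcomp Require Import all_boot all_order all_algebra.
From mathcomp Require Import all_classical all_reals all_analysis.
From mathcomp Require Import complex.
From mathcomp Require Import ring lra zify.
Import Order.TTheory GRing.Theory Num.Theory.
Import numFieldNormedType.Exports.
Local Open Scope ring_scope.
Local Open Scope classical_set_scope.
Set Implicit Arguments.
Unset Strict Implicit.


Section Van.
Variable R : realType.

Definition vanish (a : nat -> R) :=
  forall e : R, 0 < e -> exists N, forall k, (N <= k)%N -> a k <= e.

Lemma vanish_geo (r : R) : 0 <= r < 1 -> vanish (fun k => r ^+ k).
Proof.
case/andP=> r0 r1 e e0.
have : `|r| < 1 by rewrite ger0_norm.
move/cvg_expr/cvgrPdist_le/(_ e e0) => [N _ HN]; exists N => k Hk.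
have := HN k Hk; rewrite /= sub0r normrN ger0_norm ?exprn_ge0//.
Qed.

Lemma vanish_rec (a b : nat -> R) (r : R) :
  (forall k, 0 <= a k) -> 0 <= r < 1 ->
  (forall k, a k.+1 <= r * a k + b k) -> vanish b -> vanish a.
Proof.
move=> a0 /andP[r0 r1] hrec vb e e0.
have e2 : 0 < e * (1 - r) / 2 by rewrite divr_gt0 // mulr_gt0 // subr_gt0.
have [N HN] := vb _ e2.
have key : forall m, a (N + m)%N <= r ^+ m * a N + e / 2.
  elim=> [|m IH]; first by rewrite addn0 expr0 mul1r lerDl; lra.
  rewrite addnS; apply: (le_trans (hrec _)).
  have hb := HN (N + m)%N (leq_addr _ _).
  have : r * a (N + m)%N <= r * (r ^+ m * a N + e / 2) by rewrite ler_wpM2l.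
  rewrite exprS -mulrA; lra.
have [aN0|aNp] := eqVneq (a N) 0.
  exists N => k Hk; rewrite -(subnKC Hk); apply: (le_trans (key _)).
  rewrite aN0 mulr0 add0r; lra.
have aNp' : 0 < a N by rewrite lt0r aNp a0.
have e3 : 0 < e / 2 / a N by rewrite divr_gt0 // divr_gt0.
have [M HM] := @vanish_geo r (ltac:(by rewrite r0 r1)) _ e3.
exists (N + M)%N => k Hk; rewrite -(subnKC (leq_trans (leq_addr M N) Hk)).
apply: (le_trans (key _)).
have : r ^+ (k - N) <= e / 2 / a N by apply: HM; rewrite leq_subRL // ?(leq_trans (leq_addr M N) Hk).
rewrite ler_pdivlMr // => h; lra.
Qed.

End Van.


Section CM.
Variable R : realType.
Local Notation C := (R[i]).
Local Notation nc := (@Normc.normc R).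
Variable n : nat.
Variable A : 'M[C]_n.

Definition mvanish (X : nat -> 'M[C]_n) :=
  forall i j, vanish (fun k => nc (X k i j)).

Lemma nc_ge0 (z : C) : 0 <= nc z.
Proof. by case: z => a b; rewrite /Normc.normc sqrtr_ge0. Qed.

Lemma nc_add (x y : C) : nc (x + y) <= nc x + nc y.
Proof. exact: le_normcD. Qed.

Lemma peel (s : seq C) : (forall z, z \in s -> nc z < 1) ->
  forall M : 'M[C]_n,
  mvanish (fun k => (\prod_(z <- s) (A - z%:M)) *m (A ^+ k *m M)) ->
  mvanish (fun k => A ^+ k *m M).
Proof.
elim: s => [|z s IH] hs M.
  by rewrite big_nil; under eq_fun do rewrite mul1mx.
move=> H; apply: IH; first by move=> w ws; apply: hs; rewrite inE ws orbT.
set W := fun k => _.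
have comm : forall k, W k.+1 = A *m W k.
  move=> k; rewrite /W exprS -mulmxA mulmxA.
  have cA : GRing.comm A (\prod_(z0 <- s) (A - z0%:M)).
    apply: commr_prod => w _; rewrite /GRing.comm mulrBr mulrBl.
    by rewrite -[A * w%:M]/(A *m w%:M) -[w%:M * A]/(w%:M *m A) scalar_mxC.
  rewrite [RHS]mulmxA; congr (_ *m _); exact: (esym cA).
move=> i j.
have hz : 0 <= nc z < 1 by rewrite nc_ge0 hs // mem_head.
apply: (vanish_rec (r := nc z) (b := fun k => nc (((A - z%:M) *m W k) i j))) => //.
- by move=> k; apply: nc_ge0.
- move=> k.
  have -> : W k.+1 i j = z * W k i j + ((A - z%:M) *m W k) i j.
    by rewrite mulmxBl comm mul_scalar_mx !mxE; ring.
  by rewrite -Normc.normcM; exact: le_normcD.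
- have := H i j; congr vanish; apply: funext => k; rewrite big_cons /W.
  by rewrite -[_ * _]/(_ *m _) -mulmxA.
Qed.
End CM.

Lemma CH_vanish (R : realType) n (A : 'M[R[i]]_n) :
  (forall z, root (char_poly A) z -> Normc.normc z < 1) ->
  mvanish (fun k => A ^+ k).
Proof.
case: n A => [|n] A hr.
  by move=> [].
have [rs hrs] := closed_field_poly_normal (char_poly A).
move: hrs; rewrite (monicP (char_poly_monic A)) scale1r => hrs.
have hP : \prod_(z <- rs) (A - z%:M) = 0.
  rewrite -(Cayley_Hamilton A) hrs rmorph_prod; apply: eq_bigr => z _.
  by rewrite rmorphB /= horner_mx_X horner_mx_C.
have -> : (fun k => A ^+ k) = (fun k => A ^+ k *m 1).
  by apply: funext => k; rewrite mulmx1.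
apply: (@peel R n.+1 A rs).
- by move=> z zs; apply: hr; rewrite hrs root_prod_XsubC.
- rewrite hP => i j e e0; exists 0%N => k _.
  by rewrite mul0mx mxE Normc.normc0 ltW.
Qed.


Section SR.
Variable R : realType.
Variable n : nat.
Variable A : 'M[R]_n.
Local Notation Ac := (map_mx (fun x : R => x%:C%C) A).
Local Notation S := [set r : R | exists z : R[i],
         root (char_poly Ac) z /\ r = cmod z].

Lemma cmodE (z : R[i]) : cmod z = Normc.normc z.
Proof. by case: z. Qed.

Lemma S_has_sup : (exists z, root (char_poly Ac) z) -> has_sup S.
Proof.
move=> [z hz]; split; first by exists (cmod z), z.
have [rs hrs] := closed_field_poly_normal (char_poly Ac).
move: hrs; rewrite (monicP (char_poly_monic Ac)) scale1r => hrs.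
exists (\sum_(w <- rs) cmod w) => _ [w [hw ->]].
move: hw; rewrite hrs root_prod_XsubC => ws.
rewrite (big_rem w ws) /= lerDl sumr_ge0 // => x _.
by rewrite cmodE nc_ge0.
Qed.

Lemma sr_lt1 : spectral_radius A < 1 ->
  forall i j, vanish (fun k => `|(A ^+ k) i j|).
Proof.
move=> hs i j.
have hv : mvanish (fun k => Ac ^+ k).
  apply: CH_vanish => z hz.
  have hS := S_has_sup (ex_intro _ z hz).
  rewrite -cmodE; apply: le_lt_trans hs.
  by apply: sup_upper_bound => //; exists z.
have Ek : forall k, Ac ^+ k = map_mx (fun x : R => x%:C%C) (A ^+ k).
  elim=> [|k IH]; first by rewrite !expr0 map_mx1.
  by rewrite !exprS IH; apply: esym; exact: map_mxM.
have := hv i j; congr vanish; apply: funext => k.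
rewrite Ek mxE -cmodE /cmod /=.
by rewrite expr0n /= addr0 sqrtr_sqr.
Qed.

Lemma sr_gt1 : 1 < spectral_radius A ->
  exists z : R[i], root (char_poly Ac) z /\ 1 < cmod z.
Proof.
move=> hs.
have [[z hz]|nz] := pselect (exists z, root (char_poly Ac) z); last first.
  have S0 : S = set0.
    by apply/seteqP; split => // x [z [hz _]]; apply: nz; exists z.
  by move: hs; rewrite /spectral_radius S0 sup0 ltr10.
have hS := S_has_sup (ex_intro _ z hz).
have [_ [w [hw ->]] hlt] := sup_adherent (ltac:(by rewrite subr_gt0; exact: hs) : 0 < spectral_radius A - 1) hS.
by exists w; split => //; move: hlt; rewrite opprB addrC subrK.
Qed.

End SR.

Lemma char_poly_tr (R : comNzRingType) n (M : 'M[R]_n) : char_poly M^T = char_poly M.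
Proof.
rewrite /char_poly -det_tr; congr (\det _); apply/matrixP => i j.
by rewrite !mxE eq_sym.
Qed.

Lemma nc_sum (R : realType) (I : Type) (r : seq I) (P : pred I) (F : I -> R[i]) :
  Normc.normc (\sum_(i <- r | P i) F i) <= \sum_(i <- r | P i) Normc.normc (F i).
Proof.
elim/big_rec2: _ => [|i y1 y2 _ hy]; first by rewrite Normc.normc0.
by apply: le_trans (le_normcD _ _) _; rewrite lerD2l.
Qed.

Lemma nc_real (R : realType) (a : R) : Normc.normc (a%:C%C) = `|a|.
Proof. by rewrite /Normc.normc /= expr0n /= addr0 sqrtr_sqr. Qed.

Lemma eig_pos (R : realType) n (A : 'M[R]_n) :
  (forall i j, 0 <= A i j) -> 1 < spectral_radius A ->
  exists c0 : R, exists w : 'I_n -> R,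
    [/\ 1 < c0, forall j, 0 <= w j, exists j, 0 < w j &
        forall i, c0 * w i <= \sum_j A i j * w j].
Proof.
move=> A0 /sr_gt1 [z [hz hz1]].
have : eigenvalue (map_mx (fun x : R => x%:C%C) A)^T z.
  by rewrite eigenvalue_root_char char_poly_tr.
move=> /eigenvalueP [v hv v0].
exists (cmod z), (fun j => Normc.normc (v 0 j)); split => //.
- by move=> j; apply: nc_ge0.
- have [j hj] : exists j, v 0 j != 0.
    apply/existsP; move: v0; apply: contraR; rewrite negb_exists => /forallP h.
    by apply/eqP/rowP => j; rewrite mxE; apply/eqP; have := h j; rewrite negbK.
  exists j; rewrite lt0r nc_ge0 andbT; apply/eqP => h0; move/eqP: hj; apply.
  exact: Normc.eq0_normc.
- move=> i.
  move/rowP: hv => /(_ i); rewrite !mxE => e.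
  rewrite cmodE -Normc.normcM -e.
  apply: le_trans (nc_sum _ _ _) _; apply: ler_sum => j _.
  by rewrite !mxE Normc.normcM nc_real ger0_norm // mulrC.
Qed.


Section Lim.
Variable R : realType.

Lemma within_eps (f : R -> R) (D : set R) (x L : R) :
  f @ within D (nbhs x) --> L -> forall e : R, 0 < e ->
  exists2 d : R, 0 < d & forall y, D y -> `|x - y| < d -> `|L - f y| < e.
Proof.
move/cvgrPdist_lt => H e e0.
have := H e e0; rewrite /within /= => /nbhs_ballP [d d0 hd].
exists d => // y Dy hxy; apply: hd => //.
Qed.

Lemma withinD_eps (f : R -> R) (D : set R) (x L : R) :
  f @ within D (x^') --> L -> forall e : R, 0 < e ->
  exists2 d : R, 0 < d & forall y, D y -> y != x -> `|x - y| < d -> `|L - f y| < e.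
Proof.
move/cvgrPdist_lt => H e e0.
have := H e e0; rewrite /within /= => /nbhs_ballP [d d0 hd].
exists d => // y Dy yx hxy; apply: hd => //.
Qed.

Lemma cont_eps (f : R -> R) (x : R) :
  {within `[0, 1], continuous f} -> x \in `[0, 1] -> forall e : R, 0 < e ->
  exists2 d : R, 0 < d & forall y, y \in `[0,1] -> `|x - y| < d -> `|f x - f y| < e.
Proof.
move=> /subspace_continuousP H x01.
have hx := x01; rewrite in_setE in hx.
have := H x hx.
move/within_eps => H2 e e0; have [d d0 hd] := H2 e e0.
exists d => // y y01 hxy; apply: hd => //; by rewrite in_setE in y01.
Qed.
End Lim.


Lemma big_ineq (R : realFieldType) (I : Type) (r : seq I) (P : pred I) (t : I -> R) :
  (forall i, P i -> 0 <= t i <= 1) ->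
  [/\ 0 <= \sum_(i <- r | P i) t i, 0 <= \prod_(i <- r | P i) (1 - t i) <= 1,
      1 - \prod_(i <- r | P i) (1 - t i) <= \sum_(i <- r | P i) t i &
      \prod_(i <- r | P i) (1 - t i) <= 1 - \sum_(i <- r | P i) t i + (\sum_(i <- r | P i) t i) ^+ 2].
Proof.
move=> ht.
pose K := fun (S Pr : R) => [/\ 0 <= S, 0 <= Pr <= 1, 1 - Pr <= S & Pr <= 1 - S + S ^+ 2].
elim/big_rec2: _ => [|i S Pr Pi [h1 /andP[h2 h3] h4 h5]].
  by rewrite expr0n /=; split => //; lra.
have /andP[t0 t1] := ht i Pi.
split.
- lra.
- apply/andP; split; nra.
- have : t i * Pr <= t i by rewrite ler_piMr.
  nra.
- have : (1 - t i) * Pr <= (1 - t i) * (1 - S + S ^+ 2) by rewrite ler_wpM2l // subr_ge0.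
  have : 0 <= t i * S * (1 + S) by rewrite mulr_ge0 ?mulr_ge0 //; lra.
  rewrite expr2; nra.
Qed.

Section Dyn.
Variables (R : realType) (V : finType) (G : rel V).
Local Notation E := (edge G).
Local Notation n := #|{: E}|.
Variable q : E -> R.
Hypothesis q01 : forall b, 0 <= q b <= 1.

Definition hc (b a : E) := (ehead b == etail a) && (etail b != ehead a).

Lemma Fmap_t (y : E -> R) a :
  Fmap q y a = \prod_(b | hc b a) (1 - q b * (1 - y b)).
Proof. by apply: eq_bigr => b _; ring. Qed.

Definition in01 (y : E -> R) := forall b, 0 <= y b <= 1.

Lemma t01 (y : E -> R) b : in01 y -> 0 <= q b * (1 - y b) <= 1.
Proof.
move=> hy; have := hy b; have := q01 b => /andP[? ?] /andP[? ?].
apply/andP; split; nra.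
Qed.

Lemma Fmap01 (y : E -> R) : in01 y -> in01 (Fmap q y).
Proof.
move=> hy a; rewrite Fmap_t.
by have [_ h _ _] := @big_ineq R E (index_enum E) (hc^~ a) (fun b => q b * (1 - y b)) (fun b _ => t01 b hy).
Qed.

Lemma Fmap_lin (y : E -> R) a : in01 y ->
  1 - Fmap q y a <= \sum_(b | hc b a) q b * (1 - y b).
Proof.
move=> hy; rewrite Fmap_t.
by have [_ _ h _] := @big_ineq R E (index_enum E) (hc^~ a) (fun b => q b * (1 - y b)) (fun b _ => t01 b hy).
Qed.

Lemma Fmap_quad (y : E -> R) a : in01 y ->
  Fmap q y a <= 1 - \sum_(b | hc b a) q b * (1 - y b) +
                     (\sum_(b | hc b a) q b * (1 - y b)) ^+ 2.
Proof.
move=> hy; rewrite Fmap_t.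
by have [_ _ _ h] := @big_ineq R E (index_enum E) (hc^~ a) (fun b => q b * (1 - y b)) (fun b _ => t01 b hy).
Qed.

Lemma Fmap_mono (y y' : E -> R) : in01 y -> in01 y' ->
  (forall b, y b <= y' b) -> forall a, Fmap q y a <= Fmap q y' a.
Proof.
move=> hy hy' hyy a; apply: ler_prod => b _.
have := hy b; have := hy' b; have := q01 b; have := hyy b.
move=> ? /andP[? ?] /andP[? ?] /andP[? ?].
apply/andP; split; nra.
Qed.

Definition xit (m : nat) : E -> R := iter m (Fmap q) (fun _ => 0).

Lemma xit01 m : in01 (xit m).
Proof.
elim: m => [|m IH]; first by move=> b; rewrite /xit /= lexx ler01.
by rewrite /xit iterS; apply: Fmap01.
Qed.

Lemma xit_mono m a : xit m a <= xit m.+1 a.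
Proof.
elim: m a => [|m IH] a; first by have /andP[] := xit01 1 a.
rewrite /xit !iterS; apply: Fmap_mono; [exact: xit01|exact: (xit01 m.+1)|exact: IH].
Qed.

Lemma sum_mx (u : E -> R) a :
  \sum_(b | hc b a) q b * u b =
  \sum_(j < n) BTdiag q (enum_rank a) j * u (enum_val j).
Proof.
rewrite big_mkcond /= (big_enum_val (A := {: E})) /=.
apply: eq_bigr => j _; rewrite mxE enum_rankK /hashimoto -/(hc _ _).
by case: (hc _ _); rewrite ?mul1r ?mul0r.
Qed.

End Dyn.


Lemma vanish_fin (R : realType) (I : finType) (a : I -> nat -> R) :
  (forall i, vanish (a i)) -> forall e, 0 < e ->
  exists N, forall i k, (N <= k)%N -> a i k <= e.
Proof.
move=> ha e e0.
have /choice [f hf] : forall i, exists N, forall k, (N <= k)%N -> a i k <= e.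
  by move=> i; apply: ha.
exists (\max_i f i) => i k hk; apply: hf; apply: leq_trans hk.
exact: leq_bigmax.
Qed.

Lemma pow_bound (R : realFieldType) (eta : R) (K : nat) : 0 <= eta ->
  2 * K%:R * eta <= 1 -> (1 + eta) ^+ K <= 1 + 2 * K%:R * eta.
Proof.
move=> e0; elim: K => [|k IH] hk; first by rewrite expr0 mulr0 mul0r addr0.
have hk' : 2 * k%:R * eta <= 1.
  by apply: le_trans hk; rewrite ler_wpM2r // ler_wpM2l // ler_nat.
have := IH hk'; rewrite exprS -natr1 => h.
have : (1 + eta) * (1 + eta) ^+ k <= (1 + eta) * (1 + 2 * k%:R * eta).
  by rewrite ler_wpM2l //; lra.
move: hk; rewrite -natr1; nra.
Qed.

Section Mx.
Variable R : realType.
Variable n : nat.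

Lemma mx_nonneg_pow (A : 'M[R]_n) : (forall i j, 0 <= A i j) ->
  forall k i j, 0 <= (A ^+ k) i j.
Proof.
move=> hA; elim=> [|k IH] i j; first by rewrite expr0 mxE ler0n.
by rewrite exprS mxE sumr_ge0 // => l _; rewrite mulr_ge0.
Qed.

Lemma mx_cmp_pow (A B : 'M[R]_n) (c : R) : 0 <= c ->
  (forall i j, 0 <= A i j) -> (forall i j, A i j <= c * B i j) ->
  forall k i j, (A ^+ k) i j <= c ^+ k * (B ^+ k) i j.
Proof.
move=> c0 hA hAB; elim=> [|k IH] i j; first by rewrite !expr0 mul1r.
rewrite !exprS !mxE mulr_sumr; apply: ler_sum => l _.
have h1 := hAB i l; have h2 := IH l j.
have h3 := hA i l; have h4 := mx_nonneg_pow hA k l j.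
apply: le_trans (ler_pM h3 h4 h1 h2) _.
by rewrite mulrACA.
Qed.

Lemma mx_mono (A : 'M[R]_n) (v w : 'cV[R]_n) : (forall i j, 0 <= A i j) ->
  (forall j, v j 0 <= w j 0) -> forall i, (A *m v) i 0 <= (A *m w) i 0.
Proof.
move=> hA hvw i; rewrite !mxE; apply: ler_sum => j _.
by rewrite ler_wpM2l.
Qed.

End Mx.

Section DirA.
Variables (R : realType) (V : finType) (G : rel V).
Local Notation E := (edge G).
Local Notation n := #|{: E}|.

Lemma BT_ge0 (q : E -> R) : (forall b, 0 <= q b) -> forall i j, 0 <= BTdiag q i j.
Proof. by move=> hq i j; rewrite mxE mulr_ge0 // /hashimoto ler0n. Qed.

Lemma BT_cmp (q q0 : E -> R) (c : R) : (forall b, q b <= c * q0 b) ->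
  forall i j, BTdiag q i j <= c * BTdiag q0 i j.
Proof.
move=> hq i j; rewrite !mxE mulrCA ler_wpM2l //.
Qed.

Lemma xit_step (q : E -> R) (q01 : forall b, 0 <= q b <= 1) m i :
  1 - xit q m.+1 (enum_val i) <=
  \sum_(j < n) BTdiag q i j * (1 - xit q m (enum_val j)).
Proof.
rewrite /xit iterS -/(xit q m).
have := Fmap_lin q01 (enum_val i) (xit01 q01 m).
by rewrite (sum_mx q (fun b => 1 - xit q m b)) enum_valK.
Qed.

Definition Uv (q : E -> R) m : 'cV[R]_n := \col_j (1 - xit q m (enum_val j)).

Lemma xit_pow (q : E -> R) (q01 : forall b, 0 <= q b <= 1) m k i :
  Uv q (m + k) i 0 <= (BTdiag q ^+ k *m Uv q m) i 0.
Proof.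
have hA := BT_ge0 (fun b => proj1 (andP (q01 b))).
elim: k i => [|k IH] i; first by rewrite addn0 expr0 mul1mx.
rewrite addnS {1}/Uv mxE.
apply: le_trans (xit_step q01 _ _) _.
rewrite exprS -mulmxA.
have := mx_mono hA (v := Uv q (m + k)) (w := BTdiag q ^+ k *m Uv q m) IH i.
move=> h; apply: le_trans h; rewrite mxE; apply: ler_sum => j _; by rewrite /Uv !mxE.
Qed.

Lemma dirA (q0 : E -> R) : (forall b, 0 <= q0 b) ->
  (forall i j, vanish (fun k => `|(BTdiag q0 ^+ k) i j|)) ->
  exists2 eta : R, 0 < eta & forall q : E -> R, (forall b, 0 <= q b <= 1) ->
    (forall b, q b <= (1 + eta) * q0 b) -> Qfix q = (fun _ => 1).
Proof.
move=> hq0 hv.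
have e0 : 0 < 1 / (2 * (n%:R + 1)) :> R by rewrite divr_gt0 // mulr_gt0 // ltr_wpDl.
have [K hK] := vanish_fin (a := fun ij : 'I_n * 'I_n => fun k => `|(BTdiag q0 ^+ k) ij.1 ij.2|)
  (fun ij => hv ij.1 ij.2) e0.
pose eta : R := 1 / (8 * (K%:R + 1)).
have eta0 : 0 < eta by rewrite divr_gt0 // mulr_gt0 // ltr_wpDl.
exists eta => // q q01 hqq.
have hA := BT_ge0 (fun b => proj1 (andP (q01 b))).
have hA0 := BT_ge0 hq0.
have hpow : (1 + eta) ^+ K <= 5 / 4.
  have h8 : 2 * K%:R * eta <= 1 / 4.
    rewrite /eta mulrA ler_pdivrMr ?mulr_gt0 ?ltr_wpDl //.
    rewrite mul1r; nra.
  apply: le_trans (pow_bound (ltW eta0) _) _; lra.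
have contr : forall m (c : R), 0 <= c -> (forall j, Uv q m j 0 <= c) ->
    forall i, Uv q (m + K) i 0 <= 5 / 8 * c.
  move=> m c c0 hc i; apply: le_trans (xit_pow q01 m K i) _.
  rewrite mxE.
  apply: (@le_trans _ _ (\sum_(j < n) 5 / 4 * (1 / (2 * (n%:R + 1))) * c)).
    apply: ler_sum => j _.
    have h1 := mx_cmp_pow (ltac:(lra) : 0 <= 1 + eta) hA (BT_cmp hqq) K i j.
    have h2 := mx_nonneg_pow hA0 K i j.
    have h3 := hK (i, j) K (leqnn K); rewrite /= ger0_norm // in h3.
    have h4 := mx_nonneg_pow hA K i j.
    have hu : 0 <= Uv q m j 0.
      by rewrite mxE subr_ge0; have /andP[] := xit01 q01 m (enum_val j).
    have hc' := hc j.
    have h5 : (1 + eta) ^+ K * (BTdiag q0 ^+ K) i j <= 5 / 4 * (1 / (2 * (n%:R + 1))).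
      apply: ler_pM => //; first by rewrite exprn_ge0 // addr_ge0 // ltW.
    have := ler_pM h4 hu (le_trans h1 h5) hc'; apply: le_trans; lra.
  rewrite sumr_const card_ord -[X in X <= _]mulr_natr.
  have : n%:R / (n%:R + 1) <= 1 :> R by rewrite ler_pdivrMr ?ltr_wpDl // mul1r lerDl.
  set N := n%:R; move=> hN.
  have hN1 : 0 < N + 1 by rewrite ltr_wpDl.
  have -> : 5 / 4 * (1 / (2 * (N + 1))) * c * N = 5 / 8 * c * (N / (N + 1)).
    by field; rewrite gt_eqF.
  by rewrite -[X in _ <= X]mulr1 ler_wpM2l // mulr_ge0 //; lra.
have U0 : forall m j, 0 <= Uv q m j 0.
  by move=> m j; rewrite mxE subr_ge0; have /andP[] := xit01 q01 m (enum_val j).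
have geo : forall Q r i, Uv q (Q * K + r) i 0 <= (5 / 8) ^+ Q.
  elim=> [|Q IH] r i.
    rewrite mul0n add0n expr0 mxE lerBlDr lerDl.
    by have /andP[] := xit01 q01 r (enum_val i).
  have -> : (Q.+1 * K + r = (Q * K + r) + K)%N by rewrite mulSn; lia.
  by rewrite exprS; apply: contr => //.
apply: funext => a; rewrite /Qfix; apply: (cvg_lim (@Rhausdorff R)).
apply/cvgrPdist_le => e e00.
have [Q0 hQ0] := @vanish_geo R (5 / 8) (ltac:(apply/andP; split; lra)) e e00.
exists (Q0 * K)%N => // m /= hm.
have := geo Q0 (m - Q0 * K)%N (enum_rank a); rewrite subnKC //.
have := U0 m (enum_rank a).
rewrite mxE enum_rankK => hu hle.
rewrite ger0_norm //; apply: le_trans hle _; exact: hQ0.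
Qed.
End DirA.

Section DirB.
Variables (R : realType) (V : finType) (G : rel V).
Local Notation E := (edge G).
Local Notation n := #|{: E}|.

Lemma Qfix_le (q : E -> R) (q01 : forall b, 0 <= q b <= 1) (y : E -> R) :
  in01 y -> (forall a, Fmap q y a <= y a) -> forall a, Qfix q a <= y a.
Proof.
move=> hy hF.
have hx : forall m a, xit q m a <= y a.
  elim=> [|m IH] a; first by have /andP[] := hy a.
  rewrite /xit iterS; apply: le_trans (hF a).
  apply: Fmap_mono => //; exact: xit01.
move=> a; rewrite /Qfix.
have hc := @nondecreasing_cvgn R (fun m => xit q m a) _ _.
rewrite (cvg_lim (@Rhausdorff R) (hc _ _)).
- apply: ge_sup; first by exists (xit q 0 a), 0%N.
  by move=> _ [m _ <-]; apply: hx.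
- by apply/nondecreasing_seqP => m; apply: xit_mono.
- by exists 1 => _ [m _ <-]; have /andP[] := xit01 q01 m a.
Qed.


Lemma dirB (q0 : E -> R) (w : 'I_n -> R) (c0 : R) : 1 < c0 ->
  (forall j, 0 <= w j) -> (forall b, 0 <= q0 b) ->
  (forall i, c0 * w i <= \sum_j BTdiag q0 i j * w j) ->
  exists2 eta : R, 0 < eta & exists2 eps : R, 0 < eps &
    forall q : E -> R, (forall b, 0 <= q b <= 1) ->
    (forall b, (1 - eta) * q0 b <= q b) ->
    forall a, Qfix q a <= 1 - eps * w (enum_rank a).
Proof.
move=> c01 w0 q00 hw.
pose c := (1 + c0) / 2.
have c1 : 1 < c by rewrite /c; lra.
pose eta := (c0 - 1) / (2 * c0).
have c00 : 0 < c0 by lra.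
have eta0 : 0 < eta by rewrite /eta divr_gt0 // ?subr_gt0 // mulr_gt0.
have eta1 : (1 - eta) * c0 = c.
  by rewrite /eta /c; field; rewrite gt_eqF.
have eta2 : 0 <= 1 - eta.
  have e2 : eta * (2 * c0) = c0 - 1 by rewrite /eta; field; rewrite gt_eqF.
  nra.
pose W := \sum_j w j.
have W0 : 0 <= W by rewrite sumr_ge0.
have wW : forall j, w j <= W.
  by move=> j; rewrite /W (bigD1 j) //= lerDl sumr_ge0.
pose ic := c^-1.
have icc : ic * c = 1 by rewrite /ic mulVf // gt_eqF // (lt_trans ltr01 c1).
have ic0 : 0 < ic by rewrite /ic invr_gt0 (lt_trans ltr01 c1).
pose eps := (1 - ic) / (W + 1).
have ic1 : ic < 1 by rewrite /ic invf_lt1 // (lt_trans ltr01 c1).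
have eps0 : 0 < eps by rewrite /eps divr_gt0 // ?subr_gt0 // ltr_wpDl.
have epsW : eps * W <= 1 - ic.
  rewrite /eps mulrAC ler_pdivrMr ?ltr_wpDl //.
  by rewrite ler_wpM2l ?subr_ge0 ?ltW //; lra.
exists eta => //; exists eps => // q q01 hq a.
pose y := fun b : E => 1 - eps * w (enum_rank b).
have hy : in01 y.
  move=> b; rewrite /y; have := wW (enum_rank b); have := w0 (enum_rank b).
  move=> h1 h2; have : eps * w (enum_rank b) <= eps * W by rewrite ler_wpM2l // ltW.
  have : 0 <= eps * w (enum_rank b) by rewrite mulr_ge0 // ltW.
  move=> h3 h4; apply/andP; split; lra.
apply: (Qfix_le q01 hy) => {}a.
have hA := BT_ge0 (fun b => proj1 (andP (q01 b))).
pose i := enum_rank a.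
have := Fmap_quad q01 a hy.
rewrite (sum_mx q (fun b => 1 - y b)) -/i.
have -> : \sum_(j < n) BTdiag q i j * (1 - y (enum_val j)) =
          eps * \sum_(j < n) BTdiag q i j * w j.
  rewrite mulr_sumr; apply: eq_bigr => j _; rewrite /y enum_valK; ring.
set s := \sum_(j < n) BTdiag q i j * w j.
have hs1 : c * w i <= s.
  rewrite -eta1 -mulrA; apply: le_trans (ler_wpM2l eta2 (hw i)) _.
  rewrite mulr_sumr; apply: ler_sum => j _; rewrite mulrA; apply: ler_wpM2r => //.
  rewrite !mxE mulrCA ler_wpM2l // /hashimoto ler0n //.
have hs2 : s <= W.
  apply: ler_sum => j _; apply: ler_piMl => //.
  rewrite mxE; have /andP[_ q1] := q01 (enum_val j).
  by rewrite /hashimoto; case: (_ && _); rewrite ?mul1r ?mul0r.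
have hs0 : 0 <= s by rewrite sumr_ge0 // => j _; rewrite mulr_ge0.
have hS1 : eps * s <= 1 - ic.
  by apply: le_trans epsW; rewrite ler_wpM2l // ltW.
have hwi := w0 i.
rewrite /y -/i => hF; apply: le_trans hF _.
set S := eps * s.
have hS0 : 0 <= S by rewrite mulr_ge0 // ltW.
have hS2 : c * (eps * w i) <= S by rewrite /S mulrCA ler_wpM2l // ltW.
have h1 : S * ic <= S * (1 - S) by rewrite ler_wpM2l // /S; lra.
have h2 : eps * w i <= S * ic.
  by rewrite -[eps * w i]mul1r -icc -mulrA mulrC ler_wpM2r // ltW.
have : S * (1 - S) = S - S ^+ 2 by rewrite expr2; ring.
lra.
Qed.
End DirB.


Lemma mem01 (R : realType) (x : R) : (x \in `[0, 1]) <-> (0 <= x <= 1).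
Proof. by rewrite in_setE /= in_itv. Qed.
Lemma mem01o (R : realType) (x : R) : (x \in `[0, 1[) <-> (0 <= x < 1).
Proof. by rewrite in_setE /= in_itv. Qed.

Lemma fin_delta (R : realType) (I : finType) (P : I -> R -> Prop) :
  (forall i, exists2 d : R, 0 < d & forall y, `|y| < d -> P i y) ->
  exists2 d : R, 0 < d & forall i y, `|y| < d -> P i y.
Proof.
move=> h.
suff : forall s : seq I, exists2 d : R, 0 < d & forall i, i \in s -> forall y, `|y| < d -> P i y.
  by case/(_ (enum I)) => d d0 hd; exists d => // i y; apply: hd; rewrite mem_enum.
elim=> [|i s [d d0 hd]]; first by exists 1.
have [d1 d10 hd1] := h i.
exists (Num.min d d1); first by rewrite lt_min d0 d10.
move=> j; rewrite inE => /orP[/eqP -> | js] y; rewrite lt_min => /andP[h1 h2].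
  exact: hd1.
exact: hd.
Qed.

Theorem lemma3 (R : realType) (V : finType) (G : rel V)
    (p : R -> edge G -> R) (lc : R) (ln : nat -> R) :
  hashimoto_irreducible R G ->
  (forall a : edge G, {within `[0, 1], continuous (fun l => p l a)}) ->
  (forall l, l \in `[0, 1] -> forall a, 0 < p l a <= 1) ->
  lc \in `[0, 1[ ->
  (forall a : edge G,
     (fun l => Qfix (p l) a) @ within (fun l => l \in `[0, 1]) lc^' --> (1 : R)) ->
  (forall n, ln n \in `[0, 1]) ->
  ln @ \oo --> lc ->
  (forall n, Qfix (p (ln n)) <> (fun _ => 1)) ->
  spectral_radius (BTdiag (p lc)) = 1.
Proof.
move=> _ hcont hp01 hlc hQ hln hcv hneq.
have /mem01o /andP[lc0 lc1] := hlc.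
have lc01 : lc \in `[0, 1] by apply/mem01; rewrite lc0 ltW.
have hq0 := hp01 lc lc01.
have q00 : forall b, 0 <= p lc b by move=> b; have /andP[/ltW] := hq0 b.
have q01 : forall l, l \in `[0, 1] -> forall b, 0 <= p l b <= 1.
  by move=> l hl b; have /andP[/ltW -> ->] := hp01 l hl b.
have close : forall eta : R, 0 < eta -> exists2 d : R, 0 < d &
    forall b l, `|lc - l| < d -> l \in `[0, 1] -> `|p lc b - p l b| < eta * p lc b.
  move=> eta eta0.
  have := @fin_delta R (edge G) (fun b y => forall l, y = lc - l -> l \in `[0, 1] ->
                `|p lc b - p l b| < eta * p lc b).
  case.
  - move=> b; have [d d0 hd] := cont_eps (hcont b) lc01 (mulr_gt0 eta0 (proj1 (andP (hq0 b)))).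
    by exists d => // y hy l hyl hl; apply: hd => //; rewrite -hyl.
  - move=> d d0 hd; exists d => // b l hl hl01; exact: hd _ _ hl _ erefl hl01.
case: (ltgtP (spectral_radius (BTdiag (p lc))) 1) => // [hlt|hgt].
-
  have [eta eta0 hA] := dirA q00 (sr_lt1 hlt).
  have [d d0 hd] := close eta eta0.
  have := hcv; move/cvgrPdist_lt/(_ d d0) => [N _ hN].
  have hNN := hN N (leqnn N).
  exfalso; apply: (hneq N); apply: hA; first exact: q01.
  move=> b; have := hd b (ln N) hNN (hln N).
  rewrite ltr_distlC => /andP[_ h]; rewrite mulrDl mul1r; lra.
-
  exfalso.
  have [c0 [w [c01 w0 [j0 wj0] hw]]] := eig_pos (BT_ge0 q00) hgt.
  have [eta eta0 [eps eps0 hB]] := dirB c01 w0 q00 hw.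
  have [d1 d10 hd1] := close eta eta0.
  pose a0 := enum_val j0.
  have e0 : 0 < eps * w j0 by rewrite mulr_gt0.
  have [d2 d20 hd2] := withinD_eps (hQ a0) e0.
  pose d := Num.min (Num.min d1 d2) (1 - lc).
  have dpos : 0 < d by rewrite /d !lt_min d10 d20 subr_gt0 lc1.
  have dd1 : d <= d1 by rewrite /d !ge_min lexx.
  have dd2 : d <= d2 by rewrite /d !ge_min lexx orbT.
  have dd3 : d <= 1 - lc by rewrite /d !ge_min lexx orbT.
  pose l := lc + d / 2.
  have hl01 : l \in `[0, 1] by apply/mem01; apply/andP; split; rewrite /l; lra.
  have hdist : `|lc - l| = d / 2 by rewrite /l opprD addrA subrr sub0r normrN ger0_norm //; lra.
  have hl1 : (l != lc) by rewrite /l; apply/eqP; lra.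
  have := hd2 l hl01 hl1 (ltac:(rewrite hdist; lra)).
  have := hB (p l) (q01 l hl01) _ a0.
  rewrite enum_valK => hle.
  have hb : forall b, (1 - eta) * p lc b <= p l b.
    move=> b; have := hd1 b l (ltac:(rewrite hdist; lra)) hl01.
    rewrite ltr_distlC => /andP[h _]; rewrite mulrBl mul1r; lra.
  move/hle: hb => hQle.
  rewrite ltr_distlC => /andP[h _]; lra.
Qed.
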